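(* (1) Let $a_{n,j}=2^j\binom nj$ for integers $n\geq 3$, $0\leq j\leq n$. Then for all integers $m\geq2$ and $0\leq l\leq m-1$, $$\frac{a_{3m-3,\,3m-l-3}}{a_{3m-3,\,l+m-1}}\leq\frac{a_{3m-2,\,3m-l-2}}{a_{3m-2,\,l+m-1}}\leq\frac{a_{3m-1,\,3m-l-1}}{a_{3m-1,\,l+m-1}}\leq 9.$$ (2) Let $a_{n,j}=3^j\binom nj$ for integers $n\geq2$, $0\leq j\leq n$. Then for all integers $m\geq2$ and $0\leq l\leq\lfloor (m-1)/2\rfloor$, $$\frac{a_{2m-2,\,2m-l-2}}{a_{2m-2,\,l+m-1}}\leq\frac{a_{2m-1,\,2m-l-1}}{a_{2m-1,\,l+m-1}}\leq 8.$$ *)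

(* Defs.v *)
From HB Require Import structures.
From mathcomp Require Import all_boot all_order all_algebra.
Set Implicit Arguments. Unset Strict Implicit. Unset Printing Implicit Defensive.
Import Order.TTheory GRing.Theory Num.Theory.

Definition acoef (c n j : nat) : rat := ((c ^ j * 'C(n, j))%N)%:R.

(* Main.v *)
Require Import Defs.
From HB Require Import structures.
From mathcomp Require Import all_boot all_order all_algebra.
From mathcomp Require Import ring zify.
Import Order.TTheory GRing.Theory Num.Theory.
Local Open Scope ring_scope.

Definition Rt (c j1 k1 j2 k2 : nat) : rat :=
  ((c ^ j1 * (j2`! * k2`!))%N)%:R / ((c ^ j2 * (j1`! * k1`!))%N)%:R.

Lemma divQ_le (x y z w : nat) : (0 < y)%N -> (0 < w)%N -> (x * w <= z * y)%N ->
  x%:R / y%:R <= z%:R / w%:R :> rat.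
Proof.
move=> y0 w0 h.
rewrite ler_pdivrMr ?ltr0n // mulrAC ler_pdivlMr ?ltr0n // -!natrM ler_nat.
done.
Qed.

Lemma acoef_ratio c n j1 j2 J1 K1 J2 K2 : (0 < c)%N -> j1 = J1 -> j2 = J2 ->
  n = (J1 + K1)%N -> n = (J2 + K2)%N -> acoef c n j1 / acoef c n j2 = Rt c J1 K1 J2 K2.
Proof.
move=> c0 -> -> e1 e2; rewrite /acoef /Rt.
have h1 := @bin_fact n J1; have h2 := @bin_fact n J2.
have l1 : (J1 <= n)%N by lia.
have l2 : (J2 <= n)%N by lia.
have s1 : (n - J1 = K1)%N by lia.
have s2 : (n - J2 = K2)%N by lia.
rewrite s1 in h1; rewrite s2 in h2.
have p1 : (0 < c ^ J2 * 'C(n, J2))%N by rewrite muln_gt0 expn_gt0 c0 bin_gt0.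
have p2 : (0 < c ^ J2 * (J1`! * K1`!))%N by rewrite muln_gt0 expn_gt0 c0 muln_gt0 !fact_gt0.
apply/eqP; rewrite eqr_div ?pnatr_eq0 -?lt0n // -!natrM eqr_nat; apply/eqP.
rewrite (_ : (c ^ J1 * 'C(n, J1) * (c ^ J2 * (J1`! * K1`!)) =
   c ^ J1 * c ^ J2 * ('C(n, J1) * (J1`! * K1`!)))%N); last by ring.
rewrite (_ : (c ^ J1 * (J2`! * K2`!) * (c ^ J2 * 'C(n, J2)) =
   c ^ J1 * c ^ J2 * ('C(n, J2) * (J2`! * K2`!)))%N); last by ring.
by rewrite h1 ?h2.
Qed.

Lemma Rt_le c j1 k1 j2 k2 j1' k1' j2' k2' : (0 < c)%N ->
  (c ^ j1 * (j2`! * k2`!) * (c ^ j2' * (j1'`! * k1'`!)) <=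
   c ^ j1' * (j2'`! * k2'`!) * (c ^ j2 * (j1`! * k1`!)))%N ->
  Rt c j1 k1 j2 k2 <= Rt c j1' k1' j2' k2'.
Proof.
move=> c0 h; apply: divQ_le => //;
by rewrite muln_gt0 expn_gt0 c0 muln_gt0 !fact_gt0.
Qed.

Lemma fact1 n : (n + 1)`! = ((n + 1) * n`!)%N.
Proof. by rewrite addn1 factS. Qed.
Lemma fact2 n : (n + 2)`! = ((n + 2) * (n + 1) * n`!)%N.
Proof. by rewrite addn2 !factS addn1 mulnA. Qed.
Lemma fact3 n : (n + 3)`! = ((n + 3) * (n + 2) * (n + 1) * n`!)%N.
Proof. by rewrite addn3 !factS addn2 addn1 !mulnA. Qed.

Definition G a q := Rt 2 (2*a+3*q+2) a (2*a+q) (a+2*q+2).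

Lemma G_step1 a q :
  (4 * (2*a+q+1) * (a+2*q+3) * (a+2*q+4) <= (2*a+3*q+3) * (2*a+3*q+4) * (2*a+3*q+5))%N ->
  G a q.+1 <= G a q.
Proof.
move=> h; apply: Rt_le => //.
rewrite (_ : (2*a+3*q.+1+2 = (2*a+3*q+2)+3)%N); last by lia.
rewrite (_ : (2*a+q.+1 = (2*a+q)+1)%N); last by lia.
rewrite (_ : (a+2*q.+1+2 = (a+2*q+2)+2)%N); last by lia.
set A := (2*a+3*q+2)%N; set B := (2*a+q)%N; set C := (a+2*q+2)%N.
rewrite (expnD 2 A 3) (expnD 2 B 1) (fact3 A) (fact2 C) (fact1 B).
set X := (2^A * 2^B * A`! * B`! * C`! * a`!)%N.
rewrite [L in (L <= _)%N](_ : _ = X * (2^3 * (B+1) * ((C+2)*(C+1))))%N; last by rewrite /X; ring.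
rewrite [L in (_ <= L)%N](_ : _ = X * (2^1 * ((A+3)*(A+2)*(A+1))))%N; last by rewrite /X; ring.
rewrite leq_mul2l; apply/orP; right.
rewrite /A /B /C; lia.
Qed.

Lemma G_step2 a q :
  ((2*a+q+1) * (2*a+q+2) * (a+2*q+3) <= (a+1) * (2*a+3*q+3) * (2*a+3*q+4))%N ->
  G a.+1 q <= G a q.
Proof.
move=> h; apply: Rt_le => //.
rewrite (_ : (2*a.+1+3*q+2 = (2*a+3*q+2)+2)%N); last by lia.
rewrite (_ : (2*a.+1+q = (2*a+q)+2)%N); last by lia.
rewrite (_ : (a.+1+2*q+2 = (a+2*q+2)+1)%N); last by lia.
rewrite (_ : (a.+1 = a+1)%N); last by lia.
set A := (2*a+3*q+2)%N; set B := (2*a+q)%N; set C := (a+2*q+2)%N.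
rewrite (expnD 2 A 2) (expnD 2 B 2) (fact2 A) (fact2 B) (fact1 C) (fact1 a).
set X := (2^A * 2^B * A`! * B`! * C`! * a`!)%N.
rewrite [L in (L <= _)%N](_ : _ = X * (2^2 * ((B+2)*(B+1)) * (C+1)))%N; last by rewrite /X; ring.
rewrite [L in (_ <= L)%N](_ : _ = X * (2^2 * ((A+2)*(A+1)) * (a+1)))%N; last by rewrite /X; ring.
rewrite leq_mul2l; apply/orP; right.
rewrite /A /B /C; lia.
Qed.

Lemma Rt_mono c A k B C A' C' : (0 < c)%N -> A' = (A + 1)%N -> C' = (C + 1)%N ->
  (A + 1 <= c * (C + 1))%N -> Rt c A k B C <= Rt c A' k B C'.
Proof.
move=> c0 -> -> h; apply: Rt_le => //.
rewrite (expnD c A 1) (fact1 A) (fact1 C).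
set X := (c^A * c^B * A`! * B`! * C`! * k`!)%N.
rewrite [L in (L <= _)%N](_ : _ = X * (A+1))%N; last by rewrite /X; ring.
rewrite [L in (_ <= L)%N](_ : _ = X * (c^1 * (C+1)))%N; last by rewrite /X; ring.
by rewrite leq_mul2l expn1 h orbT.
Qed.

Lemma Rt_const c A k B C (K : nat) : (0 < c)%N ->
  (c ^ A * (B`! * C`!) <= K * (c ^ B * (A`! * k`!)))%N -> Rt c A k B C <= K%:R.
Proof.
move=> c0 h; rewrite /Rt ler_pdivrMr ?ltr0n ?muln_gt0 ?expn_gt0 ?c0 ?fact_gt0 //.
by rewrite -natrM ler_nat.
Qed.

Lemma G_le9 n : forall a q, (a + q = n.+1)%N -> G a q <= 9%:R.
Proof.
elim: n => [|n IH] a q h.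
  case: a h => [|[|a]] h.
  - have -> : q = 1%N by lia.
    by apply: Rt_const.
  - have -> : q = 0%N by lia.
    by apply: Rt_const.
  - lia.
case: a h => [|a] h.
  have -> : q = n.+2 by lia.
  apply: le_trans (G_step1 _ _ _) (IH 0 n.+1 _); [nia | lia].
case: q h => [|q] h.
  apply: le_trans (G_step2 _ _ _) (IH a 0 _); [nia | lia].
case: (leqP (q.+1 * (q.+1+2)) (3*(a.+1+q.+1))) => hc.
  apply: le_trans (G_step2 _ _ _) (IH a q.+1 _); [nia | lia].
apply: le_trans (G_step1 _ _ _) (IH a.+1 q _); [nia | lia].
Qed.

Definition H a e := Rt 3 (3*a+2*e+1) a (3*a+e) (a+e+1).

Lemma H_step1 a e :
  (3 * (3*a+e+1) * (a+e+2) <= (3*a+2*e+2) * (3*a+2*e+3))%N ->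
  H a e.+1 <= H a e.
Proof.
move=> h; apply: Rt_le => //.
rewrite (_ : (3*a+2*e.+1+1 = (3*a+2*e+1)+2)%N); last by lia.
rewrite (_ : (3*a+e.+1 = (3*a+e)+1)%N); last by lia.
rewrite (_ : (a+e.+1+1 = (a+e+1)+1)%N); last by lia.
set A := (3*a+2*e+1)%N; set B := (3*a+e)%N; set C := (a+e+1)%N.
rewrite (expnD 3 A 2) (expnD 3 B 1) (fact2 A) (fact1 C) (fact1 B).
set X := (3^A * 3^B * A`! * B`! * C`! * a`!)%N.
rewrite [L in (L <= _)%N](_ : _ = X * (3^2 * (B+1) * (C+1)))%N; last by rewrite /X; ring.
rewrite [L in (_ <= L)%N](_ : _ = X * (3^1 * ((A+2)*(A+1))))%N; last by rewrite /X; ring.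
rewrite leq_mul2l; apply/orP; right.
rewrite /A /B /C; lia.
Qed.

Lemma H_step2 a e :
  ((3*a+e+3) * (3*a+e+2) <= 3 * (a+1) * (3*a+2*e+4))%N ->
  H a.+1 e <= H a e.+1.
Proof.
move=> h; apply: Rt_le => //.
rewrite (_ : (3*a.+1+2*e+1 = (3*a+2*e.+1+1)+1)%N); last by lia.
rewrite (_ : (3*a.+1+e = (3*a+e.+1)+2)%N); last by lia.
rewrite (_ : (a.+1+e+1 = a+e.+1+1)%N); last by lia.
rewrite (_ : (a.+1 = a+1)%N); last by lia.
set A := (3*a+2*e.+1+1)%N; set B := (3*a+e.+1)%N; set C := (a+e.+1+1)%N.
rewrite (expnD 3 A 1) (expnD 3 B 2) (fact1 A) (fact2 B) (fact1 a).
set X := (3^A * 3^B * A`! * B`! * C`! * a`!)%N.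
rewrite [L in (L <= _)%N](_ : _ = X * (3^1 * ((B+2)*(B+1))))%N; last by rewrite /X; ring.
rewrite [L in (_ <= L)%N](_ : _ = X * (3^2 * ((A+1) * (a+1))))%N; last by rewrite /X; ring.
rewrite leq_mul2l; apply/orP; right.
rewrite /A /B /C; lia.
Qed.

Lemma H_le8 n : forall a e, (2 * a + e = n.+1)%N -> H a e <= 8%:R.
Proof.
elim: n => [|n IH] a e h.
  have -> : a = 0%N by lia.
  have -> : e = 1%N by lia.
  by apply: Rt_const.
case: a h => [|a] h.
  have -> : e = n.+2 by lia.
  apply: le_trans (H_step1 _ _ _) (IH 0 n.+1 _); [nia | lia].
case: (leqP (e * e) (6 * a.+1 + e)) => hc.
  apply: le_trans (H_step2 _ _ _) (IH a e.+1 _); [nia | lia].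
case: e h hc => [|e] h hc; first lia.
apply: le_trans (H_step1 _ _ _) (IH a.+1 e _); [nia | lia].
Qed.

Theorem lemma3p5 :
  (forall m l : nat, (2 <= m)%N -> (l <= m - 1)%N ->
     acoef 2 ((3 * m)%N - 3)%N ((3 * m)%N - l - 3)%N / acoef 2 ((3 * m)%N - 3)%N (l + m - 1)%N
       <= acoef 2 ((3 * m)%N - 2)%N ((3 * m)%N - l - 2)%N / acoef 2 ((3 * m)%N - 2)%N (l + m - 1)%N
     /\ acoef 2 ((3 * m)%N - 2)%N ((3 * m)%N - l - 2)%N / acoef 2 ((3 * m)%N - 2)%N (l + m - 1)%N
       <= acoef 2 ((3 * m)%N - 1)%N ((3 * m)%N - l - 1)%N / acoef 2 ((3 * m)%N - 1)%N (l + m - 1)%N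
     /\ acoef 2 ((3 * m)%N - 1)%N ((3 * m)%N - l - 1)%N / acoef 2 ((3 * m)%N - 1)%N (l + m - 1)%N <= 9%:R)
  /\
  (forall m l : nat, (2 <= m)%N -> (l <= (m - 1)./2)%N ->
     acoef 3 ((2 * m)%N - 2)%N ((2 * m)%N - l - 2)%N / acoef 3 ((2 * m)%N - 2)%N (l + m - 1)%N
       <= acoef 3 ((2 * m)%N - 1)%N ((2 * m)%N - l - 1)%N / acoef 3 ((2 * m)%N - 1)%N (l + m - 1)%N
     /\ acoef 3 ((2 * m)%N - 1)%N ((2 * m)%N - l - 1)%N / acoef 3 ((2 * m)%N - 1)%N (l + m - 1)%N <= 8%:R).
Proof.
split.
  move=> m l hm hl.
  set q := (m - 1 - l)%N.
  have mE : m = (l + q + 1)%N by rewrite /q; lia.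
  clearbody q.
  rewrite (@acoef_ratio 2 _ _ _ (2 * l+3 * q) l (2 * l+q) (l+2 * q)); try by lia.
  rewrite (@acoef_ratio 2 _ _ _ (2 * l+3 * q+1) l (2 * l+q) (l+2 * q+1)); try by lia.
  rewrite (@acoef_ratio 2 _ _ _ (2 * l+3 * q+2) l (2 * l+q) (l+2 * q+2)); try by lia.
  split; first by apply: Rt_mono => //; lia.
  split; first by apply: Rt_mono => //; lia.
  apply: (@G_le9 (l + q).-1); lia.
move=> m l hm hl.
have hl2 : (2 * l <= m - 1)%N by have := odd_double_half (m-1); lia.
set e := (m - 1 - 2 * l)%N.
have mE : m = (2 * l + e + 1)%N by rewrite /e; lia.
clearbody e.
rewrite (@acoef_ratio 3 _ _ _ (3 * l+2 * e) l (3 * l+e) (l+e)); try by lia.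
rewrite (@acoef_ratio 3 _ _ _ (3 * l+2 * e+1) l (3 * l+e) (l+e+1)); try by lia.
split; first by apply: Rt_mono => //; lia.
apply: (@H_le8 (2 * l + e).-1); lia.
Qed.
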